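(* Let $\Omega$ be a program with weight constraints, $Z$ a consistent set of literals, and $\Pi_1$ the program consisting of the rules $l\leftarrow\mathit{not}\,\mathit{not}\,l,[C_1],\dots,[C_n]$ for every rule $C_0\leftarrow C_1,\dots,C_n$ of $\Omega$ and every positive head element $l$ of that rule. If $\mathit{cl}(\Omega^Z)$ is consistent then it is the only answer set of the program $\Pi_1^Z$; otherwise $\Pi_1^Z$ has no answer sets.
   Context: A literal is an atom $a$ or $\neg a$; a set of literals is consistent if it contains no pair $a,\neg a$. Formulas are built from literals, $\bot$, $\top$ using $\mathit{not}$, '','' (conjunction), '';'' (disjunction). For a set $Z$ of literals: $Z\models l$ iff $l\in Z$; $Z\models\top$; $Z\not\models\bot$; $Z\models(F,G)$ iff both; $Z\models(F;G)$ iff at least one; $Z\models\mathit{not}\,F$ iff $Z\not\models F$; $Z$ satisfies a set of rules $\mathit{Head}\leftarrow\mathit{Body}$ if $Z\models\mathit{Body}$ implies $Z\models\mathit{Head}$ for each. Reduct: $F^Z=F$ for $F$ a literal, $\bot$, $\top$; $(F,G)^Z=F^Z,G^Z$; $(F;G)^Z=F^Z;G^Z$; $(\mathit{not}\,F)^Z=\bot$ if $Z\models F$, else $\top$; $\Pi^Z$ applies this to heads and bodies. A consistent set is an answer set of a $\mathit{not}$-free program if it is a minimal consistent set of literals satisfying it. $\langle F_1,\dots,F_n\rangle:X$ is the disjunction over $I\in X$ of the conjunctions of $F_i$, $i\in I$ (empty conjunction $\top$, empty disjunction $\bot$). A rule element is a literal $l$ (positive) or $\mathit{not}\,l$ (negative).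 A weight constraint is $L\le\{c_1=w_1,\dots,c_m=w_m\}\le U$ ($L,U$ reals or $\pm\infty$, $w_i\ge0$); $Z$ satisfies it if $L\le\sum_{j:Z\models c_j}w_j\le U$. A program with weight constraints is a set of rules $C_0\leftarrow C_1,\dots,C_n$; the rule elements of $C_0$ are the head elements. $(L\le S)^Z=L^Z\le S'$, where $S'$ drops the pairs with negative elements and $L^Z$ is $L$ minus the sum of weights of pairs $c=w$ with $c$ negative and $Z\models c$. The reduct of $L_0\le S_0\le U_0\leftarrow L_1\le S_1\le U_1,\dots,L_n\le S_n\le U_n$ is, if $Z$ satisfies $S_i\le U_i$ for all $1\le i\le n$, the set of rules $l\leftarrow(L_1\le S_1)^Z,\dots,(L_n\le S_n)^Z$ for all positive head elements $l$ with $l\in Z$; otherwise empty. $\Omega^Z$ is the union of the reducts of its rules; a set of literals satisfies $\Omega^Z$ if for each rule whose body constraints it satisfies it contains the head literal. $\mathit{cl}(\Omega^Z)$ (the deductive closure) is the unique minimal set of literals satisfying $\Omega^Z$. Translation: $[w\le S]=\langle c_1,\dots,c_m\rangle:\{I: w\le\sum_{i\in I}w_i\}$, $[w<S]=\langle c_1,\dots,c_m\rangle:\{I: w<\sum_{i\in I}w_i\}$, $[S\le U]=\mathit{not}\,[U<S]$, $[L\le S\le U]=[L\le S],[S\le U]$. *)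

(* Defs.v *)
From Stdlib Require Import Reals List ClassicalEpsilon.
Import ListNotations.
Open Scope R_scope.
Set Implicit Arguments.

Definition decP (P : Prop) : bool :=
  if excluded_middle_informative P then true else false.

Inductive lit (A : Type) : Type := Pos (a : A) | Neg (a : A).
Arguments Pos {A} a.
Arguments Neg {A} a.

Definition lset (A : Type) := lit A -> Prop.
Definition lsubset {A} (X Y : lset A) := forall l, X l -> Y l.
Definition consistent {A} (Z : lset A) := forall a, ~ (Z (Pos a) /\ Z (Neg a)).

Inductive formula (A : Type) : Type :=
| FLit (l : lit A) | FBot | FTop
| FNot (F : formula A) | FAnd (F G : formula A) | FOr (F G : formula A).
Arguments FBot {A}.
Arguments FTop {A}.

Fixpoint sat {A} (Z : lset A) (F : formula A) : Prop :=
  match F with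
  | FLit l => Z l
  | FBot => False
  | FTop => True
  | FNot G => ~ sat Z G
  | FAnd G H => sat Z G /\ sat Z H
  | FOr G H => sat Z G \/ sat Z H
  end.

Fixpoint freduct {A} (Z : lset A) (F : formula A) : formula A :=
  match F with
  | FNot G => if decP (sat Z G) then FBot else FTop
  | FAnd G H => FAnd (freduct Z G) (freduct Z H)
  | FOr G H => FOr (freduct Z G) (freduct Z H)
  | _ => F
  end.

Fixpoint bigconj {A} (l : list (formula A)) : formula A :=
  match l with [] => FTop | [F] => F | F :: r => FAnd F (bigconj r) end.
Fixpoint bigdisj {A} (l : list (formula A)) : formula A :=
  match l with [] => FBot | [F] => F | F :: r => FOr F (bigdisj r) end.

Record prule (A : Type) := mkPrule { phead : formula A; pbody : formula A }.
Definition program (A : Type) := prule A -> Prop.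

Definition sat_prog {A} (Z : lset A) (P : program A) :=
  forall r, P r -> sat Z (pbody r) -> sat Z (phead r).

Definition preduct {A} (Z : lset A) (P : program A) : program A :=
  fun r' => exists r, P r /\
    r' = mkPrule (freduct Z (phead r)) (freduct Z (pbody r)).

Definition answer_set_notfree {A} (P : program A) (Y : lset A) :=
  consistent Y /\ sat_prog Y P /\
  forall Y', consistent Y' -> sat_prog Y' P -> lsubset Y' Y -> lsubset Y Y'.

Inductive relem (A : Type) : Type := EPos (l : lit A) | ENeg (l : lit A).
Arguments EPos {A} l.
Arguments ENeg {A} l.

(* L <= {c1=w1,...,cm=wm} <= U ; None for lower = -oo, None for upper = +oo *)
Record wconstr (A : Type) :=
  mkW { lo : option R; elems : list (relem A * R); hi : option R }.
Record wrule (A : Type) := mkWR { whead : wconstr A; wbody : list (wconstr A) }.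
Definition wprogram (A : Type) := wrule A -> Prop.

Definition esat {A} (Z : lset A) (e : relem A) : Prop :=
  match e with EPos l => Z l | ENeg l => ~ Z l end.

Definition lo_ok (L : option R) (x : R) : Prop :=
  match L with None => True | Some L => L <= x end.
Definition hi_ok (U : option R) (x : R) : Prop :=
  match U with None => True | Some U => x <= U end.

Definition wsum {A} (Z : lset A) (s : list (relem A * R)) : R :=
  fold_right (fun p acc => (if decP (esat Z (fst p)) then snd p else 0) + acc) 0 s.

Definition wsat {A} (Z : lset A) (C : wconstr A) : Prop :=
  lo_ok (lo C) (wsum Z (elems C)) /\ hi_ok (hi C) (wsum Z (elems C)).

Definition is_positive_head {A} (l : lit A) (r : wrule A) : Prop :=
  In (EPos l) (map fst (elems (whead r))).

(* rules  l <- (L1 <= S1'), ..., (Ln <= Sn')  with S' containing only literals *)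
Record rrule (A : Type) :=
  mkRR { rhead : lit A; rbody : list (option R * list (lit A * R)) }.

Definition neg_sum {A} (Z : lset A) (s : list (relem A * R)) : R :=
  fold_right (fun p acc =>
    (match fst p with
     | ENeg l => if decP (~ Z l) then snd p else 0
     | EPos _ => 0 end) + acc) 0 s.

Fixpoint pos_part {A} (s : list (relem A * R)) : list (lit A * R) :=
  match s with
  | [] => []
  | (EPos l, w) :: r => (l, w) :: pos_part r
  | (ENeg _, _) :: r => pos_part r
  end.

Definition lreduct {A} (Z : lset A) (C : wconstr A) : option R * list (lit A * R) :=
  (option_map (fun L => L - neg_sum Z (elems C)) (lo C), pos_part (elems C)).

Definition wreduct {A} (O : wprogram A) (Z : lset A) : rrule A -> Prop :=
  fun rr => exists r, O r /\
    (forall C, In C (wbody r) -> hi_ok (hi C) (wsum Z (elems C))) /\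
    is_positive_head (rhead rr) r /\ Z (rhead rr) /\
    rbody rr = map (lreduct Z) (wbody r).

Definition pos_sum {A} (Y : lset A) (s : list (lit A * R)) : R :=
  fold_right (fun p acc => (if decP (Y (fst p)) then snd p else 0) + acc) 0 s.

Definition rsat {A} (Y : lset A) (RP : rrule A -> Prop) : Prop :=
  forall rr, RP rr ->
    (forall b, In b (rbody rr) -> lo_ok (fst b) (pos_sum Y (snd b))) ->
    Y (rhead rr).

(* deductive closure: the least set of literals satisfying RP (intersection of all
   sets satisfying RP; for nonnegative weights this is the unique minimal one) *)
Definition cl {A} (RP : rrule A -> Prop) : lset A :=
  fun l => forall Y, rsat Y RP -> Y l.

Fixpoint masks (n : nat) : list (list bool) :=
  match n with
  | O => [[]]
  | S n => map (cons true) (masks n) ++ map (cons false) (masks n)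
  end.

Fixpoint select {T} (m : list bool) (s : list T) : list T :=
  match m, s with
  | true :: m', x :: s' => x :: select m' s'
  | false :: m', _ :: s' => select m' s'
  | _, _ => []
  end.

Definition elem_formula {A} (e : relem A) : formula A :=
  match e with EPos l => FLit l | ENeg l => FNot (FLit l) end.

Definition sumw {A} (s : list (relem A * R)) : R :=
  fold_right (fun p acc => snd p + acc) 0 s.

(* <c1,...,cm> : { I | P (sum_{i in I} w_i) } *)
Definition tr_sub {A} (P : R -> Prop) (s : list (relem A * R)) : formula A :=
  bigdisj (map (fun I => bigconj (map elem_formula (map fst (select I s))))
               (filter (fun I => decP (P (sumw (select I s)))) (masks (length s)))).

Definition tr_lo {A} (C : wconstr A) : formula A := tr_sub (lo_ok (lo C)) (elems C).
Definition tr_lt_hi {A} (C : wconstr A) : formula A :=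
  tr_sub (fun x => match hi C with None => False | Some U => U < x end) (elems C).
Definition tr {A} (C : wconstr A) : formula A := FAnd (tr_lo C) (FNot (tr_lt_hi C)).

Definition Pi1 {A} (O : wprogram A) : program A :=
  fun r => exists rho l, O rho /\ is_positive_head l rho /\
    r = mkPrule (FLit l) (bigconj (FNot (FNot (FLit l)) :: map tr (wbody rho))).

Definition nonneg_weights {A} (O : wprogram A) : Prop :=
  forall rho, O rho -> forall C, In C (whead rho :: wbody rho) ->
    forall p, In p (elems C) -> 0 <= snd p.

(* Main.v *)
Require Import Defs.
From Stdlib Require Import Reals List Lra Classical ClassicalEpsilon.
Import ListNotations.
Open Scope R_scope.

Lemma decP_t (P : Prop) : P -> decP P = true.
Proof. unfold decP; destruct (excluded_middle_informative P); tauto. Qed.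
Lemma decP_f (P : Prop) : ~ P -> decP P = false.
Proof. unfold decP; destruct (excluded_middle_informative P); tauto. Qed.
Lemma decP_iff (P Q : Prop) : (P <-> Q) -> decP P = decP Q.
Proof. intro H. destruct (classic P).
 rewrite !decP_t; tauto. rewrite !decP_f; tauto. Qed.
Lemma decP_true (P : Prop) : decP P = true <-> P.
Proof. destruct (classic P). rewrite decP_t; tauto. rewrite decP_f; try tauto. split; congruence. Qed.

Lemma sat_bigconj {A} (W : lset A) L : sat W (bigconj L) <-> forall F, In F L -> sat W F.
Proof.
  induction L as [|F r IH]; simpl. split; tauto.
  destruct r as [|G r].
  - simpl. split. intros H F' [<-|[]]; auto. intros H; apply H; auto.
  - change (sat W F /\ sat W (bigconj (G :: r)) <-> (forall F0, F = F0 \/ In F0 (G :: r) -> sat W F0)).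
    rewrite IH. split. intros [H1 H2] F0 [<-|H]; auto. intros H; split; auto.
Qed.

Lemma sat_bigdisj {A} (W : lset A) L : sat W (bigdisj L) <-> exists F, In F L /\ sat W F.
Proof.
  induction L as [|F r IH]; simpl. split. tauto. intros [F [[] _]].
  destruct r as [|G r].
  - simpl. split. intros H; exists F; auto. intros [F' [[<-|[]] H]]; auto.
  - change (sat W F \/ sat W (bigdisj (G :: r)) <-> (exists F0, (F = F0 \/ In F0 (G :: r)) /\ sat W F0)).
    rewrite IH. split. intros [H|[F0 [H1 H2]]]; eauto.
    intros [F0 [[<-|H] H2]]; eauto.
Qed.

Lemma freduct_bigconj {A} (Z : lset A) L : freduct Z (bigconj L) = bigconj (map (freduct Z) L).
Proof.
  induction L as [|F r IH]; simpl. reflexivity.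
  destruct r as [|G r]. reflexivity.
  change (FAnd (freduct Z F) (freduct Z (bigconj (G :: r))) = FAnd (freduct Z F) (bigconj (map (freduct Z) (G :: r)))).
  rewrite IH; reflexivity.
Qed.

Lemma freduct_bigdisj {A} (Z : lset A) L : freduct Z (bigdisj L) = bigdisj (map (freduct Z) L).
Proof.
  induction L as [|F r IH]; simpl. reflexivity.
  destruct r as [|G r]. reflexivity.
  change (FOr (freduct Z F) (freduct Z (bigdisj (G :: r))) = FOr (freduct Z F) (bigdisj (map (freduct Z) (G :: r)))).
  rewrite IH; reflexivity.
Qed.

Lemma sat_freduct_self {A} (Z : lset A) F : sat Z (freduct Z F) <-> sat Z F.
Proof.
  induction F; simpl; try tauto.
  destruct (classic (sat Z F)).
  rewrite decP_t; simpl; tauto. rewrite decP_f; simpl; tauto.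
Qed.

Definition qsum {A} (q : relem A -> Prop) (s : list (relem A * R)) : R :=
  fold_right (fun p acc => (if decP (q (fst p)) then snd p else 0) + acc) 0 s.

Definition nonneg {A} (s : list (relem A * R)) := forall p, In p s -> 0 <= snd p.

Lemma qsum_ext {A} (q1 q2 : relem A -> Prop) s : (forall e, q1 e <-> q2 e) -> qsum q1 s = qsum q2 s.
Proof. intro H; induction s; simpl; auto. rewrite IHs, (decP_iff _ _ (H _)); auto. Qed.

Lemma qsum_ge0 {A} (q : relem A -> Prop) s : nonneg s -> 0 <= qsum q s.
Proof.
  induction s as [|p s IH]; simpl; intros N. lra.
  assert (0 <= snd p) by (apply N; simpl; auto).
  assert (0 <= qsum q s) by (apply IH; intros x Hx; apply N; simpl; auto).
  unfold qsum in *. destruct (decP _); lra.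
Qed.

Lemma select_bound {A} (q : relem A -> Prop) s I : nonneg s ->
  (forall x, In x (select I s) -> q (fst x)) -> sumw (select I s) <= qsum q s.
Proof.
  revert I; induction s as [|p s IH]; intros I N H.
  - destruct I as [|[] I]; simpl; lra.
  - assert (0 <= snd p) by (apply N; simpl; auto).
    assert (N' : nonneg s) by (intros x Hx; apply N; simpl; auto).
    pose proof (qsum_ge0 q s N').
    destruct I as [|[] I]; simpl in *.
    + unfold qsum in *; destruct (decP _); lra.
    + rewrite decP_t by (apply H; auto).
      assert (sumw (select I s) <= qsum q s) by (apply IH; auto).
      unfold qsum, sumw in *; simpl; lra.
    + assert (sumw (select I s) <= qsum q s) by (apply IH; auto).
      unfold qsum in *; destruct (decP _); lra.
Qed.

Lemma select_max {A} (q : relem A -> Prop) s :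
  let I := map (fun p => decP (q (fst p))) s in
  sumw (select I s) = qsum q s /\ forall x, In x (select I s) -> q (fst x).
Proof.
  induction s as [|p s IH]; simpl. split; auto; intros x [].
  destruct IH as [H1 H2].
  destruct (classic (q (fst p))) as [Hq|Hq].
  - rewrite (decP_t _ Hq). simpl. split. unfold sumw in *; simpl; unfold qsum in *; lra.
    intros x [<-|Hx]; auto.
  - rewrite (decP_f _ Hq). simpl. split. unfold qsum in *; lra. auto.
Qed.

Lemma masks_all n m : length m = n -> In m (masks n).
Proof.
  revert m; induction n; intros m Hm.
  - destruct m; simpl in *; auto; discriminate.
  - destruct m as [|b m]; simpl in *; [discriminate|].
    injection Hm as Hm. apply in_or_app.
    destruct b; [left|right]; apply in_map; auto.
Qed.

Lemma tr_sub_char {A} (Y Z : lset A) (P : R -> Prop) s :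
  (forall x y, P x -> x <= y -> P y) -> nonneg s ->
  (sat Y (freduct Z (tr_sub P s)) <-> P (qsum (fun e => sat Y (freduct Z (elem_formula e))) s)).
Proof.
  intros Pm N. unfold tr_sub. rewrite freduct_bigdisj, sat_bigdisj.
  set (q := fun e => sat Y (freduct Z (elem_formula e))).
  split.
  - intros [F [HF HS]]. rewrite map_map in HF. apply in_map_iff in HF.
    destruct HF as [I [<- HI]]. apply filter_In in HI as [_ HP]. apply (proj1 (decP_true _)) in HP.
    apply (Pm _ _ HP). apply select_bound; auto.
    intros x Hx. rewrite freduct_bigconj, sat_bigconj in HS. apply HS.
    rewrite !map_map. apply in_map_iff. exists x; auto.
  - intros HP. destruct (select_max q s) as [H1 H2].
    set (I := map (fun p => decP (q (fst p))) s) in *.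
    exists (freduct Z (bigconj (map elem_formula (map fst (select I s))))).
    split.
    + apply in_map. apply in_map_iff. exists I; split; auto.
      apply filter_In; split. apply masks_all. unfold I; rewrite length_map; auto.
      apply (proj2 (decP_true _)). rewrite H1; auto.
    + rewrite freduct_bigconj, sat_bigconj. intros F HF.
      rewrite !map_map in HF. apply in_map_iff in HF. destruct HF as [x [<- Hx]].
      apply H2; auto.
Qed.

Lemma qsum_red {A} (Y Z : lset A) s :
  qsum (fun e => sat Y (freduct Z (elem_formula e))) s = pos_sum Y (pos_part s) + neg_sum Z s.
Proof.
  induction s as [|[[l|l] w] s IH]; simpl. lra.
  - unfold qsum in *; simpl in *. rewrite IH. destruct (decP (Y l)); lra.
  - unfold qsum in *; simpl in *. rewrite IH.
    rewrite (decP_iff (sat Y (if decP (Z l) then FBot else FTop)) (~ Z l)). lra.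
    destruct (classic (Z l)). rewrite decP_t by auto; simpl; tauto.
    rewrite decP_f by auto; simpl; tauto.
Qed.

Lemma qsum_self {A} (Z : lset A) s :
  qsum (fun e => sat Z (freduct Z (elem_formula e))) s = wsum Z s.
Proof.
  unfold wsum. change (qsum (fun e => sat Z (freduct Z (elem_formula e))) s = qsum (esat Z) s).
  apply qsum_ext. intros [l|l]; rewrite sat_freduct_self; simpl; tauto.
Qed.

Lemma hi_char {A} (Z : lset A) C : nonneg (elems C) ->
  (sat Z (tr_lt_hi C) <-> match hi C with None => False | Some U => U < wsum Z (elems C) end).
Proof.
  intros N. rewrite <- sat_freduct_self. unfold tr_lt_hi.
  rewrite tr_sub_char; auto. rewrite qsum_self. tauto.
  intros x y H1 H2. destruct (hi C); auto; lra.
Qed.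

Lemma lo_char {A} (Y Z : lset A) C : nonneg (elems C) ->
  (sat Y (freduct Z (tr_lo C)) <-> lo_ok (fst (lreduct Z C)) (pos_sum Y (snd (lreduct Z C)))).
Proof.
  intros N. unfold tr_lo. rewrite tr_sub_char; auto. rewrite qsum_red.
  unfold lreduct; simpl. destruct (lo C); simpl; try tauto. split; intros; lra.
  intros x y H1 H2. destruct (lo C); simpl in *; auto; lra.
Qed.

Lemma tr_char {A} (Y Z : lset A) C : nonneg (elems C) ->
  (sat Y (freduct Z (tr C)) <->
   lo_ok (fst (lreduct Z C)) (pos_sum Y (snd (lreduct Z C))) /\ hi_ok (hi C) (wsum Z (elems C))).
Proof.
  intros N. unfold tr. simpl. rewrite lo_char by auto.
  assert (E : sat Y (if decP (sat Z (tr_lt_hi C)) then FBot else FTop) <-> ~ sat Z (tr_lt_hi C)).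
  { destruct (classic (sat Z (tr_lt_hi C))). rewrite decP_t by auto; simpl; tauto.
    rewrite decP_f by auto; simpl; tauto. }
  rewrite E, hi_char by auto. unfold hi_ok. destruct (hi C).
  - split; intros [H1 H2]; split; auto. apply Rnot_lt_le; auto. lra.
  - tauto.
Qed.

Lemma body_char {A} (Y Z : lset A) l (body : list (wconstr A)) :
  (forall C, In C body -> nonneg (elems C)) ->
  (sat Y (freduct Z (bigconj (FNot (FNot (FLit l)) :: map tr body))) <->
   Z l /\ forall C, In C body ->
     lo_ok (fst (lreduct Z C)) (pos_sum Y (snd (lreduct Z C))) /\ hi_ok (hi C) (wsum Z (elems C))).
Proof.
  intros N. rewrite freduct_bigconj, sat_bigconj. simpl.
  assert (E : sat Y (if decP (~ Z l) then FBot else FTop) <-> Z l).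
  { destruct (classic (Z l)). rewrite decP_f by tauto; simpl; tauto.
    rewrite decP_t by auto; simpl; tauto. }
  split.
  - intros H. split. apply E, H; auto.
    intros C HC. apply tr_char; auto. apply H. right. rewrite map_map. apply in_map_iff; eauto.
  - intros [H1 H2] F [<-|HF]. apply E; auto.
    rewrite map_map in HF. apply in_map_iff in HF. destruct HF as [C [<- HC]].
    apply tr_char; auto. apply H2; auto.
Qed.

Lemma nn_body {A} (O : wprogram A) rho C : nonneg_weights O -> O rho -> In C (wbody rho) -> nonneg (elems C).
Proof. intros NW HO HC p Hp. apply (NW rho HO C); simpl; auto. Qed.

Lemma prog_equiv {A} (O : wprogram A) Z (Y : lset A) : nonneg_weights O ->
  (sat_prog Y (preduct Z (Pi1 O)) <-> rsat Y (wreduct O Z)).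
Proof.
  intros NW. split.
  - intros H rr [rho [HO [Hhi [Hpos [HZ Hb]]]]] Hbody.
    set (r := mkPrule (FLit (rhead rr)) (bigconj (FNot (FNot (FLit (rhead rr))) :: map tr (wbody rho)))).
    assert (Hr : Pi1 O r) by (exists rho, (rhead rr); auto).
    specialize (H (mkPrule (freduct Z (phead r)) (freduct Z (pbody r)))).
    simpl in H. apply H. exists r; auto.
    apply body_char. intros; eapply nn_body; eauto.
    split; auto. intros C HC. split; auto. apply Hbody. rewrite Hb. apply in_map; auto.
  - intros H r' [r [[rho [l [HO [Hpos ->]]]] ->]]. simpl. intros Hs.
    apply body_char in Hs. 2: intros; eapply nn_body; eauto.
    destruct Hs as [HZ HC].
    apply (H (mkRR l (map (lreduct Z) (wbody rho)))).
    + exists rho. simpl. repeat split; auto. intros C HCi; apply HC; auto.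
    + simpl. intros b Hb. apply in_map_iff in Hb. destruct Hb as [C [<- HCi]]. apply HC; auto.
Qed.

Lemma pos_part_nn {A} (s : list (relem A * R)) : nonneg s -> forall p, In p (pos_part s) -> 0 <= snd p.
Proof.
  induction s as [|[[l|l] w] s IH]; simpl; intros N p Hp; [destruct Hp| |].
  - destruct Hp as [<-|Hp]. apply (N (EPos l, w)); simpl; auto.
    apply IH; auto. intros x Hx; apply N; simpl; auto.
  - apply IH; auto. intros x Hx; apply N; simpl; auto.
Qed.

Lemma pos_sum_mono {A} (X Y : lset A) s : (forall p, In p s -> 0 <= snd p) -> lsubset X Y ->
  pos_sum X s <= pos_sum Y s.
Proof.
  intros N Sub. induction s as [|p s IH]; simpl. lra.
  assert (0 <= snd p) by (apply N; simpl; auto).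
  assert (pos_sum X s <= pos_sum Y s) by (apply IH; intros; apply N; simpl; auto).
  unfold pos_sum in *.
  destruct (classic (X (fst p))) as [Hx|Hx].
  - rewrite (decP_t _ Hx), (decP_t _ (Sub _ Hx)). lra.
  - rewrite (decP_f _ Hx). destruct (decP (Y (fst p))); lra.
Qed.

Lemma cl_sat {A} (O : wprogram A) Z : nonneg_weights O -> rsat (cl (wreduct O Z)) (wreduct O Z).
Proof.
  intros NW rr Hrr Hb Y HY. apply HY; auto.
  destruct Hrr as [rho [HO [_ [_ [_ Hrb]]]]].
  intros b Hbi. specialize (Hb b Hbi). rewrite Hrb in Hbi.
  apply in_map_iff in Hbi. destruct Hbi as [C [<- HC]].
  assert (M : pos_sum (cl (wreduct O Z)) (snd (lreduct Z C)) <= pos_sum Y (snd (lreduct Z C))).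
  { apply pos_sum_mono. apply pos_part_nn. eapply nn_body; eauto.
    intros l Hl; apply Hl; auto. }
  destruct (fst (lreduct Z C)); simpl in *; auto; lra.
Qed.

Theorem lemma7 (A : Type) (O : wprogram A) (Z : lset A) :
  nonneg_weights O -> consistent Z ->
  (consistent (cl (wreduct O Z)) ->
     forall Y, answer_set_notfree (preduct Z (Pi1 O)) Y <->
               (forall l, Y l <-> cl (wreduct O Z) l)) /\
  (~ consistent (cl (wreduct O Z)) ->
     forall Y, ~ answer_set_notfree (preduct Z (Pi1 O)) Y).
Proof.
  intros NW _. pose proof (cl_sat O Z NW) as CS.
  assert (Low : forall Y, sat_prog Y (preduct Z (Pi1 O)) -> lsubset (cl (wreduct O Z)) Y).
  { intros Y HY l Hl. apply Hl. apply prog_equiv; auto. }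
  split.
  - intros Hc Y. split.
    + intros [Hcy [Hs Hmin]]. pose proof (Low Y Hs) as L1.
      assert (L2 := Hmin _ Hc (proj2 (prog_equiv O Z _ NW) CS) L1).
      intros l; split; auto.
    + intros E. split; [|split].
      * intros a [H1 H2]. apply (Hc a); split; apply E; auto.
      * apply prog_equiv; auto. intros rr Hrr Hb. apply E.
        apply CS; auto. intros b Hbi. specialize (Hb b Hbi).
        destruct (fst b); simpl in *; auto.
        assert (pos_sum Y (snd b) = pos_sum (cl (wreduct O Z)) (snd b)) as Eq.
        { clear Hb Hbi. induction (snd b) as [|p s IH]; simpl; auto.
          unfold pos_sum in *. rewrite IH, (decP_iff _ _ (E (fst p))); auto. }
        lra.
      * intros Y' Hc' Hs' Sub l Hl. apply (Low Y' Hs'). apply E; auto.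
  - intros Hn Y [Hcy [Hs _]]. apply Hn. intros a [H1 H2].
    apply (Hcy a); split; apply Low; auto.
Qed.
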